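(* Let $X$ be a $T_0$ space. Then $\mathcal{O}(\mathcal{GSI}_2(X))=\mathcal{O}_{SI_2}(X)$; that is, a subset $U\subseteq X$ is $SI_2$-open if and only if whenever a net $(x_i)_{i\in I}$ in $X$ $GSI_2$-converges to some $x\in U$, then $x_i\in U$ eventually.
   Context: For a $T_0$ space $X$, the specialization order is $x\le y$ iff $x\in \mathrm{cl}\{y\}$; all order notions refer to it. For $A\subseteq X$, $\uparrow A=\{x: a\le x \text{ for some } a\in A\}$, $\uparrow x=\uparrow\{x\}$; $A^{\uparrow}$ is the set of upper bounds of $A$, $A^{\downarrow}$ the set of lower bounds, and $A^\delta=(A^\uparrow)^\downarrow$. A nonempty $A\subseteq X$ is irreducible if whenever $A\subseteq F_1\cup F_2$ with $F_1,F_2$ closed, then $A\subseteq F_1$ or $A\subseteq F_2$; $\mathrm{Irr}(X)$ is the set of irreducible subsets. $X^{(<\omega)}$ is the set of nonempty finite subsets of $X$. $P_S(X)$ is the set $Q(X)$ of nonempty compact saturated (upper) subsets of $X$ with the upper Vietoris topology, whose basis is $\{\square U: U\text{ open}\}$, $\square U=\{Q\in Q(X): Q\subseteq U\}$. A net is eventually in $U$ if from some index on all its terms lie in $U$. A subset $U\subseteq X$ is $SI_2$-open if $U$ is open in $X$ and for every $F\in\mathrm{Irr}(X)$, $F^\delta\cap U\ne\emptyset$ implies $F\cap U\neq\emptyset$; these form the topology $\mathcal{O}_{SI_2}(X)$. A net $(x_i)_{i\in I}$ $GSI_2$-converges to $x$ if there exists $\mathcal F\subseteq X^{(<\omega)}$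 with $\{\uparrow F:F\in\mathcal F\}$ irreducible in $P_S(X)$ such that (i) for every open $U$, if $\uparrow F\subseteq U$ for some $F\in\mathcal F$ then $x_i\in U$ eventually, and (ii) $\bigcap_{F\in\mathcal F}\uparrow F\subseteq\uparrow x$. $\mathcal{O}(\mathcal{GSI}_2(X))$ denotes the set of all $U\subseteq X$ such that whenever a net $GSI_2$-converges to a point of $U$, it is eventually in $U$. *)

(* Defs.v *)
From HB Require Import structures.
From mathcomp Require Import all_boot all_order.
From mathcomp Require Import all_classical all_reals all_analysis.
Set Implicit Arguments. Unset Strict Implicit. Unset Printing Implicit Defensive.
Local Open Scope classical_set_scope.

Section GSI2.
Variable X : topologicalType.

Definition spec_le (x y : X) : Prop := closure [set y] x.

Definition upset (A : set X) : set X := [set x | exists2 a, A a & spec_le a x].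
Definition upper_bounds (A : set X) : set X := [set y | forall a, A a -> spec_le a y].
Definition lower_bounds (A : set X) : set X := [set y | forall a, A a -> spec_le y a].
Definition delta (A : set X) : set X := lower_bounds (upper_bounds A).

Definition irreducible (A : set X) : Prop :=
  A !=set0 /\ forall F1 F2 : set X, closed F1 -> closed F2 ->
    A `<=` F1 `|` F2 -> A `<=` F1 \/ A `<=` F2.

Definition SI2_open (U : set X) : Prop :=
  open U /\ forall F : set X, irreducible F -> delta F `&` U !=set0 -> F `&` U !=set0.

Definition saturated (A : set X) : Prop := forall a x, A a -> spec_le a x -> A x.
Definition QX : set (set X) := [set K | [/\ K !=set0, compact K & saturated K]].

(* upper Vietoris topology on Q(X), generated by the basis {box U : U open} *)
Definition box (U : set X) : set (set X) := [set K | QX K /\ K `<=` U].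
Definition PS_open (W : set (set X)) : Prop :=
  W `<=` QX /\ forall K, W K -> exists U : set X, [/\ open U, K `<=` U & box U `<=` W].
Definition PS_closed (C : set (set X)) : Prop := C `<=` QX /\ PS_open (QX `\` C).

Definition PS_irreducible (A : set (set X)) : Prop :=
  A `<=` QX /\ A !=set0 /\ forall C1 C2, PS_closed C1 -> PS_closed C2 ->
    A `<=` C1 `|` C2 -> A `<=` C1 \/ A `<=` C2.

Definition directed (I : Type) (r : I -> I -> Prop) : Prop :=
  [/\ (exists i : I, True), (forall i, r i i),
      (forall i j k, r i j -> r j k -> r i k) &
      (forall i j, exists k, r i k /\ r j k)].

Definition eventually_in (I : Type) (r : I -> I -> Prop) (x : I -> X) (U : set X) : Prop :=
  exists i0, forall i, r i0 i -> U (x i).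

Definition GSI2_converges (I : Type) (r : I -> I -> Prop) (x : I -> X) (y : X) : Prop :=
  exists FF : set (set X),
    [/\ (forall F, FF F -> finite_set F /\ F !=set0),
        PS_irreducible (upset @` FF),
        (forall U : set X, open U -> (exists2 F, FF F & upset F `<=` U) ->
            eventually_in r x U) &
        \bigcap_(F in FF) upset F `<=` upset [set y]].

Definition GSI2_open (U : set X) : Prop :=
  forall (I : Type) (r : I -> I -> Prop), directed r ->
    forall (x : I -> X) (y : X), GSI2_converges r x y -> U y -> eventually_in r x U.

End GSI2.

(* Main.v *)
Require Import Defs.
From HB Require Import structures.
From mathcomp Require Import all_boot all_order.
From mathcomp Require Import all_classical all_reals all_analysis.
Local Open Scope classical_set_scope.
Set Implicit Arguments. Unset Strict Implicit.

Section Aux.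
Context {X : topologicalType}.

Lemma spec_refl (x : X) : spec_le x x.
Proof. exact: subset_closure. Qed.

Lemma open_up (V : set X) a b : open V -> V a -> spec_le a b -> V b.
Proof.
move=> oV Va ab.
have nV : nbhs a V by apply: open_nbhs_nbhs; split.
by have [c [-> Vc]] := ab V nV.
Qed.

Lemma closed_down (C : set X) a b : closed C -> C b -> spec_le a b -> C a.
Proof.
move=> cC Cb ab; rewrite (closure_id C).1 //.
by apply: (closureS _ ab) => z ->.
Qed.

Lemma spec_trans (a b c : X) : spec_le a b -> spec_le b c -> spec_le a c.
Proof.
move=> ab bc; exact: (closed_down (closed_closure (A:=[set c])) bc ab).
Qed.

Lemma openP' (D : set X) : (forall a, D a -> exists2 V, open V /\ V a & V `<=` D) -> open D.
Proof.
move=> H; rewrite openE => a Da; rewrite /interior nbhsE.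
by have [V [oV Va] VD] := H a Da; exists V.
Qed.

Lemma upset1_QX (y : X) : QX (upset [set y]).
Proof.
split.
- by exists y; exists y => //; exact: spec_refl.
- move=> F PF FA; exists y; split; first by exists y => //; exact: spec_refl.
  move=> A B FA0 nB.
  have FAy : F (A `&` upset [set y]) by apply: filterI.
  have [a [Aa [y' y'y ya]]] := filter_ex FAy.
  move: nB; rewrite nbhsE => -[V [oV Vy] VB].
  exists a; split => //; apply: VB; apply: (open_up oV Vy).
  by rewrite -y'y.
- move=> a z [y' y'y ya] az; exists y' => //; exact: spec_trans az.
Qed.

Lemma up1_sub (V : set X) y : open V -> V y -> upset [set y] `<=` V.
Proof. by move=> oV Vy z [y' -> yz]; exact: open_up oV Vy yz. Qed.

Lemma irr_PS (F : set X) : irreducible F ->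
  PS_irreducible (@upset X @` [set [set a] | a in F]).
Proof.
move=> [[a0 Fa0] Firr]; split; last split.
- by move=> _ [_ [a Fa <-] <-]; exact: upset1_QX.
- by exists (upset [set a0]); exists [set a0] => //; exists a0.
move=> C1 C2 cC1 cC2 sub.
have clG (C : set (set X)) : PS_closed C -> closed [set a | C (upset [set a])].
  move=> [CQ [_ oC]]; rewrite -openC; apply: openP' => a nCa.
  have [U [oU aU bU]] := oC (upset [set a]) (conj (upset1_QX a) nCa).
  have Ua : U a by apply: aU; exists a => //; exact: spec_refl.
  exists U => // b Ub.
  have : box U (upset [set b]) by split; [exact: upset1_QX| exact: up1_sub].
  by move/bU => [].
have : F `<=` [set a | C1 (upset [set a])] `|` [set a | C2 (upset [set a])].
  move=> a Fa; have := sub (upset [set a]); case.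
  - by exists [set a] => //; exists a.
  - by left.
  - by right.
case/(Firr _ _ (clG _ cC1) (clG _ cC2)) => H; [left|right];
  by move=> _ [_ [a Fa <-] <-]; exact: H.
Qed.


Lemma GSI2_open_open (U : set X) : GSI2_open U -> open U.
Proof.
move=> HU; apply: openP' => y Uy.
pose Idx := {p : set X * X | open p.1 /\ p.1 y /\ p.1 p.2}.
pose r := fun i j : Idx => (sval j).1 `<=` (sval i).1.
pose x := fun i : Idx => (sval i).2.
have dr : directed r.
  split.
  - by exists (exist _ (setT, y) (conj openT (conj I I))).
  - by move=> i.
  - by move=> i j k ij jk; rewrite /r => z /jk /ij.
  - move=> [[V a] /= [oV [Vy Va]]] [[W b] /= [oW [Wy Wb]]].
    by exists (exist _ (V `&` W, y) (conj (openI oV oW) (conj (conj Vy Wy) (conj Vy Wy)))); split; rewrite /r /= => z [].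
have cv : GSI2_converges r x y.
  exists [set [set a] | a in [set y]]; split.
  - by move=> _ [a -> <-]; split; [exact: finite_set1| exists y].
  - apply: irr_PS; split; first by exists y.
    move=> F1 F2 _ _ /(_ y erefl) [] H; [left|right] => z ->; exact: H.
  - move=> V oV [_ [a -> <-] sV].
    have Vy : V y by apply: sV; exists y => //; exact: spec_refl.
    exists (exist _ (V, y) (conj oV (conj Vy Vy))) => -[[W b] /= [oW [Wy Wb]]].
    by rewrite /r /x /= => /(_ b Wb).
  - by move=> z; apply; exists y.
have [[[V z] /= [oV [Vy Vz]]] Hi] := HU _ r dr x y cv Uy.
exists V => // b Vb.
exact: (Hi (exist _ (V, b) (conj oV (conj Vy Vb)))).
Qed.

Lemma GSI2_SI2 (U : set X) : GSI2_open U -> SI2_open U.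
Proof.
move=> HU; split; first exact: GSI2_open_open.
move=> F [[a0 Fa0] Firr] [y [dFy Uy]]; apply: contrapT => nFU.
pose Idx := {p : set X * X | open p.1 /\ p.1 p.2 /\ F p.2}.
pose r := fun i j : Idx => (sval j).1 `<=` (sval i).1.
pose x := fun i : Idx => (sval i).2.
have dr : directed r.
  split.
  - by exists (exist _ (setT, a0) (conj openT (conj I Fa0))).
  - by move=> i.
  - by move=> i j k ij jk; rewrite /r => z /jk /ij.
  - move=> [[V a] /= [oV [Va Fa]]] [[W b] /= [oW [Wb Fb]]].
    have [c [Fc [Vc Wc]]] : F `&` (V `&` W) !=set0.
      apply: contrapT => nFVW.
      have : F `<=` ~` V `|` ~` W.
        move=> c Fc; apply: contrapT => /not_orP [/contrapT Vc /contrapT Wc].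
        by apply: nFVW; exists c.
      case/(Firr _ _ (open_closedC oV) (open_closedC oW)) => H.
      + exact: H a Fa Va.
      + exact: H b Fb Wb.
    by exists (exist _ (V `&` W, c) (conj (openI oV oW) (conj (conj Vc Wc) Fc))); split; rewrite /r /= => z [].
have cv : GSI2_converges r x y.
  exists [set [set a] | a in F]; split.
  - by move=> _ [a Fa <-]; split; [exact: finite_set1| exists a].
  - by apply: irr_PS; split; first by exists a0.
  - move=> V oV [_ [a Fa <-] sV].
    have Va : V a by apply: sV; exists a => //; exact: spec_refl.
    exists (exist _ (V, a) (conj oV (conj Va Fa))) => -[[W b] /= [oW [Wb Fb]]].
    by rewrite /r /x /= => /(_ b Wb).
  - move=> u Hu; exists y => //; apply: dFy => a Fa.
    by have [_ -> ] := Hu _ (ex_intro2 _ _ a Fa erefl).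
have [[[V z] /= [oV [Vz Fz]]] Hi] := HU _ r dr x y cv Uy.
have := Hi (exist _ (V, z) (conj oV (conj Vz Fz))) (fun _ h => h).
by rewrite /x /= => Uz; apply: nFU; exists z.
Qed.


End Aux.

Lemma chain_fin (T : choiceType) (F : set T) (D : set (set T)) :
  finite_set F -> D !=set0 -> total_on D subset ->
  (forall d, D d -> exists2 f, F f & ~ d f) ->
  exists2 f, F f & forall d, D d -> ~ d f.
Proof.
move=> /finite_fsetP [S ->] [d0 Dd0] tot Hd; apply: contrapT => nex.
have Hf : forall f, f \in (finmap.enum_fset S) -> exists2 d, D d & d f.
  move=> f fS; apply: contrapT => nd; apply: nex; exists f => //.
  by move=> d Dd df; apply: nd; exists d.
suff [d Dd dS] : exists2 d, D d & forall f, f \in (finmap.enum_fset S) -> d f.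
  by have [f fS] := Hd d Dd; apply; apply: dS.
elim: (finmap.enum_fset S) Hf => [|a s IH] Hf; first by exists d0.
have [d1 Dd1 d1s] := IH (fun f fs => Hf f (@mem_behead _ (a :: s) f fs)).
have [d2 Dd2 d2a] := Hf a (mem_head _ _).
have [s12|s21] := tot _ _ Dd1 Dd2.
- exists d2 => // f; rewrite in_cons => /orP [/eqP -> //|fs]; exact/s12/d1s.
- exists d1 => // f; rewrite in_cons => /orP [/eqP -> |fs]; [exact/s21 | exact: d1s].
Qed.

Lemma SI2_GSI2 (X : topologicalType) (U : set X) : SI2_open U -> GSI2_open U.
Proof.
move=> [oU HSI] Idx r _ x y [FF [FFfin [PSsub [[K0 FFK0] PSirr]] Hi Hii]] Uy.
suff : exists2 F, FF F & upset F `<=` U by move=> [F FFF sFU]; exact: (Hi U oU (ex_intro2 _ _ F FFF sFU)).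
apply: contrapT => nex.
have cU : closed (~` U) by apply: open_closedC.
have meetU : forall F, FF F -> exists2 f, F f & ~ U f.
  move=> F FFF; have [b [[f Ff fb] nUb]] : upset F `&` ~` U !=set0.
    apply: contrapT => ne; apply: nex; exists F => // b ub.
    by apply: contrapT => nUb; apply: ne; exists b.
  exists f => //; exact: (closed_down cU nUb fb).
pose P := [set B : set X | open (B `|` U) /\
  forall F, FF F -> exists2 f, F f & ~ (B `|` U) f].
have [A [[oAU PA] Amax]] : exists A, P A /\ forall B, A `<` B -> ~ P B.
  apply: Zorn_bigcup => C CP tot; split.
  - apply: openP' => z [[B CB Bz]|Uz].
    + exists (B `|` U); first by split; [exact: (CP B CB).1 | left].
      by move=> w [Bw|Uw]; [left; exists B|right].
    + by exists U => // w Uw; right.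
  - move=> F FFF.
    have := @chain_fin X F ([set U] `|` [set B `|` U | B in C]) (FFfin F FFF).1.
    case.
    + by exists U; left.
    + move=> _ _ [->|[B CB <-]] [->|[B' CB' <-]].
      * by left.
      * by left => w Uw; right.
      * by right => w Uw; right.
      * by case: (tot B B' CB CB') => h; [left|right] => w [/h ?|?]; by [left|right].
    + move=> d [->|[B CB <-]]; first exact: meetU.
      exact: (CP B CB).2.
    + move=> f Ff Hf; exists f => // -[[B CB Bf]|Uf].
      * by apply: (Hf (B `|` U)); [right; exists B | left].
      * by apply: (Hf U); [left|].
pose Am := ~` (A `|` U).
have cAm : closed Am by apply: open_closedC.
have AmU : Am `<=` ~` U by move=> w nw Uw; apply: nw; right.
have [F0 FF0 _] := FFK0.
have irrAm : irreducible Am.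
  split; first by have [f _ Hf] := PA F0 FF0; exists f.
  move=> F1 F2 cF1 cF2 sub.
  apply: contrapT => /not_orP [n1 n2].
  have key : forall (Fi : set X), closed Fi -> ~ Am `<=` Fi ->
      ~ (forall F, FF F -> exists2 f, F f & ~ ((A `|` ~` Fi) `|` U) f).
    move=> Fi cFi nAmFi Q; apply: (Amax (A `|` ~` Fi)); last first.
      split => //; rewrite setUAC; exact: openU oAU (closed_openC cFi).
    split; first by move=> w Aw; left.
    move=> sub'; apply: nAmFi => w Amw; apply: contrapT => nFw.
    have : (A `|` ~` Fi) w by right.
    by move/sub' => Aw; apply: Amw; left.
  have PSc : forall Fi, closed Fi ->
      PS_closed [set K | QX K /\ K `&` (Am `&` Fi) !=set0].
    move=> Fi cFi; split; first by move=> K [].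
    split; first by move=> K [].
    move=> K [QK nCK]; exists (~` (Am `&` Fi)); split.
    - exact: closed_openC (closedI cAm cFi).
    - by move=> b Kb bAF; apply: nCK; split => //; exists b.
    - by move=> K' [QK' sK']; split => // -[_ [b [K'b bAF]]]; exact: sK' b K'b bAF.
  have cover : @upset X @` FF `<=` [set K | QX K /\ K `&` (Am `&` F1) !=set0]
       `|` [set K | QX K /\ K `&` (Am `&` F2) !=set0].
    move=> _ [F FFF <-]; have [f Ff Amf] := PA F FFF.
    have QF : QX (upset F) by apply: PSsub; exists F.
    have upf : upset F f by exists f => //; exact: spec_refl.
    by case: (sub f Amf) => h; [left|right]; split => //; exists f.
  case: (PSirr _ _ (PSc F1 cF1) (PSc F2 cF2) cover) => H.
  + apply: (key F1 cF1 n1) => F FFF.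
    have [_ [b [[f Ff fb] [Amb F1b]]]] := H (upset F) (ex_intro2 _ _ F FFF erefl).
    exists f => //.
    have Amf := closed_down cAm Amb fb; have F1f := closed_down cF1 F1b fb.
    by move=> [[Af|nF1f]|Uf]; [apply: Amf; left | exact: nF1f | apply: Amf; right].
  + apply: (key F2 cF2 n2) => F FFF.
    have [_ [b [[f Ff fb] [Amb F2b]]]] := H (upset F) (ex_intro2 _ _ F FFF erefl).
    exists f => //.
    have Amf := closed_down cAm Amb fb; have F2f := closed_down cF2 F2b fb.
    by move=> [[Af|nF2f]|Uf]; [apply: Amf; left | exact: nF2f | apply: Amf; right].
have dAm : delta Am y.
  move=> u ub.
  have : (\bigcap_(F in FF) (@upset X F)) u.
    by move=> F FFF; have [f Ff Amf] := PA F FFF; exists f => //; exact: ub.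
  by move/Hii => [y' -> ].
have [z [Amz Uz]] := HSI Am irrAm (ex_intro _ y (conj dAm Uy)).
exact: AmU Amz Uz.
Qed.

Unset Implicit Arguments.
Set Strict Implicit.

Theorem theorem3p7 (X : topologicalType) (T0 : @kolmogorov_space X) (U : set X) :
  GSI2_open U <-> SI2_open U.
Proof. by split; [exact: GSI2_SI2 | exact: SI2_GSI2]. Qed.
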